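(* Assume $B$ is connected and let $n\ge1$. For a $\mathbb{K}$-linear map $\varphi\colon A\to B$ the following are equivalent: (i) for every $a\in A$, $R_\varphi(a,z)$ is a polynomial in $z$ of degree at most $n$, and it has degree exactly $n$ for some $a\in A$; (ii) $\varphi$ is a Frobenius $n$-homomorphism.
   Context: $\mathbb{K}=\mathbb{R}$ or $\mathbb{C}$; $A$ and $B$ are commutative associative unital $\mathbb{K}$-algebras. For a $\mathbb{K}$-linear map $\varphi\colon A\to B$ and $a\in A$, the characteristic function is $R_\varphi(a,z)=\exp\bigl(\varphi(\ln(1+az))\bigr)=1+\sum_{k\ge1}\psi_k(a)z^k\in B[[z]]$, with $\ln(1+az)=\sum_{k\ge1}(-1)^{k+1}a^kz^k/k$ and $\varphi$ applied coefficientwise. The Frobenius maps $\Phi_k\colon A^k\to B$ of $\varphi$ are defined by $\Phi_1=\varphi$ and $\Phi_{k+1}(a_1,\dots,a_{k+1})=\varphi(a_1)\Phi_k(a_2,\dots,a_{k+1})-\sum_{j=2}^{k+1}\Phi_k(a_2,\dots,a_{j-1},a_1a_j,a_{j+1},\dots,a_{k+1})$. A linear map $\varphi$ is a (Frobenius) $n$-homomorphism if $\varphi(1)=n\cdot1_B$ and $\Phi_k\equiv0$ for all $k\ge n+1$. The algebra $B$ is connected if for every $b\in B$ and $k\ge0$, $b(b-1)\cdots(b-k)=0$ implies $b=j\cdot1_B$ for some $j\in\{0,\dots,k\}$. *)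

(* Defs.v *)
From HB Require Import structures.
From mathcomp Require Import all_boot all_order all_algebra.
Set Implicit Arguments. Unset Strict Implicit. Unset Printing Implicit Defensive.
Import Order.TTheory GRing.Theory Num.Theory.
Local Open Scope ring_scope.

Section Frob.
Variables (K : numFieldType) (A B : comAlgType K) (phi : {linear A -> B}).

(* Truncation (at order k) of phi(ln(1 + a z)) = sum_{j>=1} phi((-1)^(j+1) a^j / j) z^j,
   as a polynomial in z with coefficients in B. *)
Definition lnpoly (a : A) (k : nat) : {poly B} :=
  \sum_(1 <= j < k.+1) (phi (((-1) ^+ j.+1 / j%:R) *: a ^+ j))%:P * 'X^j.

Definition exptrunc (k : nat) (p : {poly B}) : {poly B} :=
  \sum_(m < k.+1) ((m`!%:R : K)^-1 *: (1 : B))%:P * p ^+ m.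

(* psi_k(a) = coefficient of z^k in R_phi(a,z) = exp(phi(ln(1+az))).
   Since phi(ln(1+az)) has no constant term, only terms of order <= k of the
   logarithm and of the exponential series contribute to the z^k coefficient. *)
Definition psi (a : A) (k : nat) : B := (exptrunc k (lnpoly a k))`_k.

(* Frobenius maps: Frob k s = Phi_k(s) for s of size k (Frob 0 = 1, so that
   Frob 1 [:: a] = phi a). *)
Fixpoint Frob (k : nat) (s : seq A) : B :=
  match k with
  | 0 => 1
  | k'.+1 =>
      phi (head 0 s) * Frob k' (behead s)
      - \sum_(j < k') Frob k' (set_nth 0 (behead s) j (head 0 s * nth 0 (behead s) j))
  end.

Definition frobenius_hom (n : nat) : Prop :=
  phi 1 = n%:R /\ forall (k : nat) (s : seq A), size s = k -> (n < k)%N -> Frob k s = 0.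

End Frob.

Definition connected_alg (K : numFieldType) (B : comAlgType K) : Prop :=
  forall (b : B) (k : nat), \prod_(i < k.+1) (b - i%:R) = 0 ->
    exists j : nat, (j <= k)%N /\ b = j%:R.

(* Main.v *)
Require Import Defs.
From HB Require Import structures.
From mathcomp Require Import all_boot all_order all_algebra.
From Stdlib Require Import Lia.
Set Implicit Arguments. Unset Strict Implicit. Unset Printing Implicit Defensive.
Import Order.TTheory GRing.Theory Num.Theory.
Local Open Scope ring_scope.

Section Work.
Variables (K : numFieldType) (A B : comAlgType K) (phi : {linear A -> B}).
Local Notation F := (Frob phi).

Lemma FrobS k x s : F k.+1 (x :: s) =
  phi x * F k s - \sum_(j < k) F k (set_nth 0 s j (x * nth 0 s j)).
Proof. by []. Qed.

Definition Ssum k y t := \sum_(i < k) F k (set_nth 0 t i (y * nth 0 t i)).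
Definition Tt k x y t (i l : nat) :=
  F k (set_nth 0 (set_nth 0 t i (x * nth 0 t i)) l
         (y * nth 0 (set_nth 0 t i (x * nth 0 t i)) l)).

Lemma grp_aux (G : zmodType) (a b c d e : G) : a - b - (d + (c - e)) = a - b - c - d + e.
Proof. rewrite opprD opprB !addrA. rewrite (addrAC _ e). congr (_ + _). by rewrite addrAC. Qed.

Lemma Frob_SS k x y t : F k.+2 (x :: y :: t) =
  phi x * phi y * F k t - phi x * Ssum k y t - phi y * Ssum k x t
  - F k.+1 (x * y :: t) + \sum_(i < k) \sum_(l < k) Tt k x y t i l.
Proof.
rewrite (FrobS k.+1 x) big_ord_recl.
have -> : F k.+1 (set_nth 0 (y :: t) ord0 (x * nth 0 (y :: t) ord0)) = F k.+1 (x * y :: t) by [].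
rewrite (FrobS k y).
have -> : \sum_(i < k) F k.+1 (set_nth 0 (y :: t) (lift ord0 i) (x * nth 0 (y :: t) (lift ord0 i)))
   = \sum_(i < k) (phi y * F k (set_nth 0 t i (x * nth 0 t i)) - \sum_(l < k) Tt k x y t i l).
  apply: eq_bigr => i _.
  have -> : set_nth 0 (y :: t) (lift ord0 i) (x * nth 0 (y :: t) (lift ord0 i)) =
     y :: set_nth 0 t i (x * nth 0 t i) by [].
  by rewrite (FrobS k y).
rewrite /Ssum; move: (F k.+1 (x * y :: t)) => d.
rewrite sumrB -mulr_sumr mulrBr mulrA.
move: (phi x * phi y * F k t) (phi x * _) (phi y * _) (\sum_(i < k) \sum_(l < k) _) => a b c e.
exact: grp_aux.
Qed.

Lemma Tt_swap k x y t i l : Tt k x y t i l = Tt k y x t l i.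
Proof.
rewrite /Tt !nth_set_nth /=.
case: (eqVneq l i) => [->|nli]; first by rewrite set_set_nth eqxx [in RHS]set_set_nth eqxx mulrCA.
have nil : i != l by rewrite eq_sym.
by rewrite [in LHS]set_set_nth (negbTE nil).
Qed.

Lemma Frob_swap k x y t : F k.+2 (x :: y :: t) = F k.+2 (y :: x :: t).
Proof.
rewrite !Frob_SS (mulrC x y) (mulrC (phi x) (phi y)).
have -> : \sum_(i < k) \sum_(l < k) Tt k x y t i l = \sum_(i < k) \sum_(l < k) Tt k y x t i l.
  rewrite exchange_big; apply: eq_bigr => i _; apply: eq_bigr => l _; exact: Tt_swap.
move: (phi y * phi x * F k t) (phi x * Ssum k y t) (phi y * Ssum k x t) => a u v.
by rewrite (addrAC a (-u)).
Qed.


Lemma perm_map_nth (u : seq A) (Is : seq nat) :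
  perm_eq Is (iota 0 (size u)) -> perm_eq [seq nth 0 u i | i <- Is] u.
Proof.
move=> pI; have := perm_map (nth 0 u) pI.
by rewrite map_nth_iota0 // take_size.
Qed.

Lemma set_nth_map (t : seq A) (Is : seq nat) j v :
  perm_eq Is (iota 0 (size t)) -> (j < size Is)%N ->
  set_nth 0 [seq nth 0 t i | i <- Is] j v = [seq nth 0 (set_nth 0 t (nth 0%N Is j) v) i | i <- Is].
Proof.
move=> pI jI; have uI : uniq Is by rewrite (perm_uniq pI) iota_uniq.
apply: (@eq_from_nth _ 0).
  by rewrite size_set_nth !size_map; apply/maxn_idPr.
move=> p; rewrite size_set_nth size_map (maxn_idPr jI) => pk.
rewrite nth_set_nth /= !(nth_map 0%N) //.
rewrite nth_set_nth /= (nth_uniq 0%N pk jI uI).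
by case: eqP.
Qed.

Lemma sum_perm_iota k (G : nat -> B) (Is : seq nat) :
  perm_eq Is (iota 0 k) -> \sum_(j < k) G (nth 0%N Is j) = \sum_(i < k) G i.
Proof.
move=> pI; have sI : size Is = k by rewrite (perm_size pI) size_iota.
rewrite -(big_mkord xpredT (fun j => G (nth 0%N Is j))) -(big_mkord xpredT G).
rewrite -{1}sI -(big_nth 0%N xpredT G) (perm_big _ pI).
by rewrite /index_iota subn0.
Qed.

Lemma Frob_tail k (IH : forall s s', size s = k -> perm_eq s s' -> F k s = F k s')
  x t t' : size t = k -> perm_eq t t' -> F k.+1 (x :: t) = F k.+1 (x :: t').
Proof.
move=> st ptt'; rewrite !FrobS (IH t t') //; congr (_ - _).
have /(perm_iotaP 0) [Is pI ->] : perm_eq t' t by rewrite perm_sym.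
have sI : size Is = k by rewrite (perm_size pI) size_iota.
rewrite st in pI.
rewrite -(sum_perm_iota (fun i => F k (set_nth 0 t i (x * nth 0 t i))) pI).
apply: eq_bigr => j _.
have jI : (j < size Is)%N by rewrite sI.
rewrite (nth_map 0%N) // set_nth_map ?st //.
symmetry; apply: IH; first by rewrite size_map.
apply: perm_map_nth.
have : nth 0%N Is j \in iota 0 k by rewrite -(perm_mem pI) mem_nth.
rewrite mem_iota add0n => /andP [_ lt].
by rewrite size_set_nth st (maxn_idPr lt).
Qed.

Lemma Frob_perm k s s' : size s = k -> perm_eq s s' -> F k s = F k s'.
Proof.
elim: k s s' => [|k IH] s s' sk pss'; first by [].
case: s sk pss' => [//|x t] [st] pss'.
have ss' := perm_size pss'.
case: s' pss' ss' => [//|y t'] pss' [st'].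
case: (eqVneq x y) => [exy|nxy].
  by rewrite -exy in pss' *; apply: Frob_tail => //; rewrite -(perm_cons x).
have yt : y \in t.
  have : y \in x :: t by rewrite (perm_mem pss') mem_head.
  by rewrite in_cons eq_sym (negbTE nxy).
have ptr := perm_to_rem yt.
case: k IH st st' => [|k] IH st st'; first by case: t st st' yt {ptr pss'}.

rewrite (Frob_tail IH x st ptr) Frob_swap; apply: Frob_tail => //.
  by rewrite /= size_rem // st.
rewrite -(perm_cons y); apply: (perm_trans _ pss').
have /= h := perm_catCA [:: y] [:: x] (rem y t).
by rewrite h perm_cons perm_sym.
Qed.

Lemma set_nth_cat (s : seq A) j v : (j < size s)%N ->
  set_nth 0 s j v = take j s ++ v :: drop j.+1 s.
Proof.
elim: s j => [|a s IH] j //=.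
case: j => [|j] /= jl; first by rewrite drop0.
by rewrite IH.
Qed.

Lemma set_nth_perm (s : seq A) j v : (j < size s)%N ->
  perm_eq (set_nth 0 s j v) (v :: (take j s ++ drop j.+1 s)).
Proof.
move=> jl; rewrite set_nth_cat //.
have /= h := perm_catCA (take j s) [:: v] (drop j.+1 s).
by rewrite h.
Qed.

Lemma size_rest (s : seq A) j : (j < size s)%N -> size (take j s ++ drop j.+1 s) = (size s).-1.
Proof.
move=> jl; rewrite size_cat size_take jl size_drop.
by case: (size s) jl => // m; rewrite ltnS => jm; rewrite subSS subnKC.
Qed.

Lemma Frob_add k s x y : size s = k ->
  F k.+1 (x + y :: s) = F k.+1 (x :: s) + F k.+1 (y :: s).
Proof.
elim: k s x y => [|k IH] s x y sk.
  by rewrite !FrobS !big_ord0 !subr0 raddfD mulrDl.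
rewrite !FrobS raddfD mulrDl addrACA -opprD -big_split; congr (_ - _).
apply: eq_bigr => j _.
have jl : (j < size s)%N by rewrite sk.
have sr : size (take j s ++ drop j.+1 s) = k by rewrite size_rest // sk.
have P v : F k.+1 (set_nth 0 s j v) = F k.+1 (v :: take j s ++ drop j.+1 s).
  by apply: Frob_perm (set_nth_perm _ jl); by rewrite size_set_nth (maxn_idPr jl) sk.
by rewrite !P mulrDl IH.
Qed.

Lemma Frob0 k s : size s = k -> F k.+1 (0 :: s) = 0.
Proof.
move=> sk; have := Frob_add 0 0 sk; rewrite addr0 => h.
by apply: (@addrI _ (F k.+1 (0 :: s))); rewrite addr0 -h.
Qed.

Lemma Frob_muln k s x n : size s = k -> F k.+1 (x *+ n :: s) = F k.+1 (x :: s) *+ n.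
Proof.
move=> sk; elim: n => [|n IHn]; first by rewrite mulr0n Frob0.
by rewrite mulrS Frob_add // IHn mulrS.
Qed.

Lemma natmul_cancel (x : B) n : (0 < n)%N -> x *+ n = 0 -> x = 0.
Proof.
move=> n0 h; have nz : (n%:R : K) != 0 by rewrite pnatr_eq0 -lt0n.
by rewrite -(scalerK nz x) scaler_nat h scaler0.
Qed.

Lemma poly_nat_roots n (p : {poly B}) s0 : (size p <= n)%N ->
  (forall t, (s0 <= t)%N -> p.[t%:R] = 0) -> p = 0.
Proof.
elim: n p s0 => [|n IH] p s0 sp h; first by apply/eqP; rewrite -size_poly_eq0 -leqn0.
have /factor_theorem [q pq] : root p s0%:R by apply/eqP; apply: h.
case: (eqVneq q 0) => [q0|qn0]; first by rewrite pq q0 mul0r.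
have sq : (size q <= n)%N.
  by move: sp; rewrite pq size_Mmonic ?monicXsubC // size_XsubC addn2.
rewrite pq (IH q s0.+1 sq) ?mul0r //.
move=> t lt; have := h t (ltnW lt); rewrite pq hornerM hornerXsubC -natrB ?(ltnW lt) //.
rewrite mulr_natr; apply: natmul_cancel; by rewrite subn_gt0.
Qed.

Section Polar.
Variables (k : nat) (a d : A) (c : seq A).

Definition E (t i j l : nat) := F k.+1 (nseq j (a + d *+ t) ++ nseq i d ++ nseq l a ++ c).

Lemma E_step t i j l : (j + i + l + size c = k)%N ->
  E t i j.+1 l = E t i j l.+1 + E t i.+1 j l *+ t.
Proof.
move=> sz; rewrite /E.
set w := a + d *+ t.
have -> : nseq j.+1 w ++ nseq i d ++ nseq l a ++ c = w :: (nseq j w ++ nseq i d ++ nseq l a ++ c) by [].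
have sr : size (nseq j w ++ nseq i d ++ nseq l a ++ c) = k by rewrite !size_cat !size_nseq !addnA.
rewrite Frob_add // Frob_muln //; congr (_ + _ *+ _); (apply: Frob_perm; first by rewrite /= sr).
  have /= h := perm_catCA [:: a] (nseq j w ++ nseq i d) (nseq l a ++ c).
  by rewrite -!catA /= in h; rewrite h.
have /= h := perm_catCA [:: d] (nseq j w) (nseq i d ++ nseq l a ++ c).
by rewrite h.
Qed.

Lemma E_poly j : forall i l, (j + i + l + size c = k.+1)%N ->
  exists p : {poly B}, [/\ forall t, p.[t%:R] = E t i j l,
     p`_0 = E 0 i 0 (l + j) & p`_1 = E 0 i.+1 0 (l + j).-1 *+ j].
Proof.
elim: j => [|j IH] i l sz.
  exists (E 0 i 0 l)%:P; split; first by move=> t; rewrite hornerC.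
    by rewrite coefC addn0.
  by rewrite coefC mulr0n.
have s1 : (j + i + l.+1 + size c = k.+1)%N by move: sz; rewrite !addSn !addnS.
have s2 : (j + i.+1 + l + size c = k.+1)%N by move: sz; rewrite !addSn !addnS.
have [p1 [h1 a1 b1]] := IH i l.+1 s1.
have [p2 [h2 a2 b2]] := IH i.+1 l s2.
exists (p1 + 'X * p2); split.
- move=> t; rewrite hornerD mulrC hornerMX h1 h2 mulr_natr E_step //.
  by move: sz; rewrite !addSn => -[].
- by rewrite coefD coefXM /= addr0 a1 addSnnS.
- by rewrite coefD coefXM /= b1 a2 addSn /= mulrS addrC addnS.
Qed.

Lemma polar_step m : (0 < m)%N -> (m + size c = k.+1)%N ->
  (forall w, F k.+1 (nseq m w ++ c) = 0) -> F k.+1 (d :: nseq m.-1 a ++ c) = 0.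
Proof.
move=> m0 sz hw.
have s0 : (m + 0 + 0 + size c = k.+1)%N by rewrite !addn0.
have [p [hp p0 p1]] := E_poly s0.
have pz : p = 0.
  apply: (@poly_nat_roots (size p) p 0) => // t _.
  rewrite hp /E; exact: hw.
move: p1; rewrite pz coef0 add0n => /esym /(natmul_cancel m0).
by rewrite /E.
Qed.
End Polar.

Lemma polarization k : (forall w, F k.+1 (nseq k.+1 w) = 0) ->
  forall s, size s = k.+1 -> F k.+1 s = 0.
Proof.
move=> hd.
suff H : forall r, (r <= k.+1)%N -> forall c, size c = r -> forall w,
    F k.+1 (nseq (k.+1 - r) w ++ c) = 0.
  by move=> s ss; have := H k.+1 (leqnn _) s ss 0; rewrite subnn.
elim=> [|r IH] rk c sc w.
  by case: c sc => // _; rewrite cats0 subn0.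
case: c sc => [//|d c] [sc].
have rk' : (r <= k.+1)%N by apply: ltnW.
have m0 : (0 < k.+1 - r)%N by rewrite subn_gt0.
rewrite (@Frob_perm _ _ (d :: nseq (k.+1 - r).-1 w ++ c)).
- apply: (@polar_step k w d c (k.+1 - r) m0); first by rewrite sc; apply: subnK.
  by move=> w'; apply: IH.
- by rewrite size_cat size_nseq /= sc subnK.
- have /= h := perm_catCA (nseq (k.+1 - r.+1) w) [:: d] c.
  rewrite h /= perm_cons subSS.
  by rewrite subSn.
Qed.

Lemma set_nth_nth (s : seq A) j : (j < size s)%N -> set_nth 0 s j (nth 0 s j) = s.
Proof. by move=> jl; rewrite set_nth_cat // -drop_nth // cat_take_drop. Qed.

Lemma Frob_one k s : size s = k -> F k.+1 (1 :: s) = (phi 1 - k%:R) * F k s.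
Proof.
move=> sk; rewrite FrobS.
rewrite (eq_bigr (fun _ => F k s)); last first.
  by move=> j _; rewrite mul1r set_nth_nth // sk.
by rewrite sumr_const card_ord mulrBl mulr_natl.
Qed.

Lemma Frob_ones k : F k (nseq k 1) = \prod_(i < k) (phi 1 - i%:R).
Proof.
elim: k => [|k IH]; first by rewrite big_ord0.
have -> : nseq k.+1 (1 : A) = 1 :: nseq k 1 by [].
by rewrite big_ord_recr Frob_one ?size_nseq // IH mulrC.
Qed.

Lemma Frob_up N : (forall s, size s = N -> F N s = 0) ->
  forall k, (N <= k)%N -> forall s, size s = k -> F k s = 0.
Proof.
move=> h; elim=> [|k IH] Nk s sk.
  by move: Nk; rewrite leqn0 => /eqP N0; subst N; apply: h.
move: Nk; rewrite leq_eqVlt => /orP [/eqP eN | Nk]; first by subst N; apply: h.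
case: s sk => [//|x t] [tk].
have Nk' : (N <= k)%N by [].
rewrite FrobS (IH Nk') // mulr0 sub0r.
rewrite big1 ?oppr0 // => j _; apply: (IH Nk').
by rewrite size_set_nth tk; apply/maxn_idPr.
Qed.

Lemma nseq_rest (x : A) k j : (j < k.+1)%N ->
  take j (nseq k.+1 x) ++ drop j.+1 (nseq k.+1 x) = nseq k x.
Proof.
move=> jk; rewrite take_nseq ?(ltnW jk) // drop_nseq subSS -nseqD subnKC //.
Qed.

Lemma Frob_set_nseq k (x v : A) j : (j < k.+1)%N ->
  F k.+1 (set_nth 0 (nseq k.+1 x) j v) = F k.+1 (v :: nseq k x).
Proof.
move=> jk; apply: Frob_perm; first by rewrite size_set_nth size_nseq (maxn_idPr jk).
by rewrite -(nseq_rest x jk) set_nth_perm // size_nseq.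
Qed.

Section Diag.
Variable a : A.
Local Notation p m := (phi (a ^+ m)).
Local Notation ps k := (psi phi a k).
Hypothesis Newton : forall k, ps k.+1 *+ k.+1 =
  \sum_(j < k.+1) (-1) ^+ j *: (p j.+1 * ps (k - j)).
Hypothesis ps0 : ps 0 = 1.

Definition Hs k m := \sum_(j < k.+1) (-1) ^+ j *: (p (m + j) * ps (k - j)).

Lemma diagD k : (forall m, F k.+1 (a ^+ m :: nseq k a) = Hs k m *+ k`!) ->
  F k.+1 (nseq k.+1 a) = ps k.+1 *+ k.+1`!.
Proof.
move=> Hk; have -> : nseq k.+1 a = a ^+ 1 :: nseq k a by rewrite expr1.
rewrite Hk /Hs factS mulrnA Newton.
by congr (_ *+ _); apply: eq_bigr => j _; rewrite add1n.
Qed.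

Lemma diagH k m : F k.+1 (a ^+ m :: nseq k a) = Hs k m *+ k`!.
Proof.
elim: k m => [|k IH] m.
  by rewrite FrobS big_ord0 subr0 /Hs big_ord1 expr0 scale1r addn0 ps0 /=.
have D := diagD IH.
rewrite FrobS D.
rewrite (eq_bigr (fun _ => Hs k m.+1 *+ k`!)); last first.
  move=> j _; rewrite nth_nseq ltn_ord -exprSr Frob_set_nseq //.
rewrite sumr_const card_ord -mulrnA mulnC -factS mulrnAr -mulrnBl.
congr (_ *+ _).
rewrite /Hs [in RHS]big_ord_recl expr0 scale1r addn0 subn0.
congr (_ + _); rewrite -sumrN; apply: eq_bigr => j _.
rewrite lift0.
by rewrite exprS mulN1r scaleNr addnS -addSn subSS.
Qed.

Lemma diag k : F k (nseq k a) = ps k *+ k`!.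
Proof.
case: k => [|k]; first by rewrite ps0.
exact: diagD (diagH k).
Qed.
End Diag.

Definition cexp m : B := ((m`!%:R : K)^-1 *: (1 : B)).

Lemma coefM_agree (P Q R : {poly B}) M : (forall j, (j <= M)%N -> P`_j = Q`_j) ->
  forall j, (j <= M)%N -> (P * R)`_j = (Q * R)`_j.
Proof.
move=> h j jM; rewrite !coefM; apply: eq_bigr => l _; rewrite h //.
by apply: leq_trans jM; rewrite -ltnS.
Qed.

Lemma pow_agree (P Q : {poly B}) M m : (forall j, (j <= M)%N -> P`_j = Q`_j) ->
  forall j, (j <= M)%N -> (P ^+ m)`_j = (Q ^+ m)`_j.
Proof.
move=> h; elim: m => [|m IH] j jM; first by [].
rewrite !exprS (coefM_agree _ h) // mulrC (mulrC Q).
exact: (coefM_agree _ IH).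
Qed.

Lemma pow_low (P : {poly B}) m j : P`_0 = 0 -> (j < m)%N -> (P ^+ m)`_j = 0.
Proof.
move=> P0; elim: m j => [//|m IH] j jm.
rewrite exprS coefM big1 // => -[l hl] _ /=.
case: l hl => [|l'] hl; first by rewrite P0 mul0r.
rewrite IH ?mulr0 //.
by move/ssrnat.ltP: hl => h1; move/ssrnat.ltP: jm => h2; apply/ssrnat.ltP; rewrite -minusE; lia.
Qed.

Lemma exptrunc_coef (P : {poly B}) M i : P`_0 = 0 -> (i <= M)%N ->
  (exptrunc M P)`_i = \sum_(m < i.+1) cexp m * (P ^+ m)`_i.
Proof.
move=> P0 iM; rewrite /exptrunc coef_sum.
rewrite (big_ord_widen M.+1 (fun m => cexp m * (P ^+ m)`_i)) //.
rewrite [RHS]big_mkcond; apply: eq_bigr => m _; rewrite coefCM.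
case: ifP => // mi; rewrite pow_low ?mulr0 //.
by rewrite ltnNge -ltnS mi.
Qed.

Section LnA.
Variable a : A.
Definition ell i := phi (((-1) ^+ i.+1 / i%:R) *: a ^+ i).

Lemma coef_ln N i : (lnpoly phi a N)`_i = if (1 <= i < N.+1)%N then ell i else 0.
Proof.
rewrite /lnpoly coef_sum (eq_bigr (fun j => if j == i then ell j else 0)); last first.
  move=> j _; rewrite coefCM coefXn eq_sym; case: eqP => [->|_]; first by rewrite mulr1.
  by rewrite mulr0.
by rewrite -big_mkcond big_nat1_eq.
Qed.

Lemma ln0 N : (lnpoly phi a N)`_0 = 0.
Proof. by rewrite coef_ln. Qed.

Lemma psi_gen M N i : (i <= M)%N -> (i <= N)%N ->
  (exptrunc M (lnpoly phi a N))`_i = psi phi a i.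
Proof.
move=> iM iN; rewrite /psi !exptrunc_coef ?ln0 //.
apply: eq_bigr => m _; congr (_ * _); apply: (pow_agree (M := i)) => // j ji.
by rewrite !coef_ln !ltnS ji (leq_trans ji iN).
Qed.

Lemma psi0 : psi phi a 0 = 1.
Proof.
by rewrite /psi /exptrunc big_ord1 expr0 mulr1 coefC /= fact0 invr1 scale1r.
Qed.

Lemma cexpS q : cexp q.+1 *+ q.+1 = cexp q.
Proof.
rewrite /cexp scalerMnl; congr (_ *: _).
have nz : (q.+1%:R : K) != 0 by rewrite pnatr_eq0.
by rewrite factS natrM invfM -mulr_natr mulrAC mulVf // mul1r.
Qed.

Lemma deriv_sumo n (G : 'I_n -> {poly B}) : (\sum_(m < n) G m)^`() = \sum_(m < n) (G m)^`().
Proof.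
elim: n G => [|n IH] G; first by rewrite !big_ord0 deriv0.
by rewrite !big_ord_recr derivD IH.
Qed.

Lemma deriv_exptrunc k (L : {poly B}) :
  (exptrunc k.+1 L)^`() = L^`() * exptrunc k L.
Proof.
rewrite /exptrunc deriv_sumo big_ord_recl deriv_mulC expr0 derivC mulr0 add0r.
rewrite mulr_sumr; apply: eq_bigr => q _.
rewrite deriv_mulC deriv_exp lift0 /= mulrnAr -mulrnAl -polyCMn -/(cexp q.+1) cexpS.
by rewrite mulrCA.
Qed.

Lemma Newton k : psi phi a k.+1 *+ k.+1 =
  \sum_(j < k.+1) (-1) ^+ j *: (phi (a ^+ j.+1) * psi phi a (k - j)).
Proof.
have -> : psi phi a k.+1 = (exptrunc k.+1 (lnpoly phi a k.+1))`_k.+1 by [].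
rewrite -coef_deriv deriv_exptrunc coefM; apply: eq_bigr => j _.
rewrite coef_deriv psi_gen ?leq_subr //; last by apply: leq_trans (leq_subr _ _) _.
rewrite coef_ln /= ltnS ltn_ord /ell linearZ /= scalerMnl -scalerAl; congr (_ *: _).
have nz : (j.+1%:R : K) != 0 by rewrite pnatr_eq0.
by rewrite -mulr_natr divfK // !exprS !mulN1r opprK.
Qed.
End LnA.

Lemma diagF a k : F k (nseq k a) = psi phi a k *+ k`!.
Proof. exact: (diag (Newton a) (psi0 a)). Qed.

Lemma prod_succ n : \prod_(i < n) ((i.+1)%:R : B) = n`!%:R.
Proof.
elim: n => [|n IH]; first by rewrite big_ord0.
by rewrite big_ord_recr IH factS natrM mulrC.
Qed.

Lemma prod_sub n : \prod_(i < n) ((n%:R : B) - i%:R) = n`!%:R.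
Proof.
rewrite -(big_mkord xpredT (fun i => (n%:R : B) - i%:R)) big_rev_mkord subn0 -prod_succ.
apply: eq_bigr => i _.
have hi : (i.+1 <= n)%N := ltn_ord i.
by rewrite -natrB ?leq_subr // subKn.
Qed.
End Work.

Theorem mainTheorem4 (K : numFieldType) (A B : comAlgType K)
    (phi : {linear A -> B}) (n : nat) :
  connected_alg B -> (1 <= n)%N ->
  ((forall (a : A) (k : nat), (n < k)%N -> psi phi a k = 0) /\
   (exists a : A, psi phi a n != 0))
  <-> frobenius_hom phi n.
Proof.
move=> conn n1; split.
- case=> [H1 [a0 Ha0]].
  have S1 : forall s, size s = n.+1 -> Frob phi n.+1 s = 0.
    apply: polarization => w; rewrite diagF H1 ?mul0rn //.
  have P0 : \prod_(i < n.+1) (phi 1 - i%:R) = 0.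
    by rewrite -Frob_ones S1 // size_nseq.
  have [j [jn bj]] := conn _ _ P0.
  have jeq : j = n.
    apply/eqP; rewrite eqn_leq jn /=; rewrite leqNgt; apply/negP => jlt.
    have Zn : forall s, size s = n -> Frob phi n s = 0.
      move=> s sn; have := Frob_one phi sn; rewrite S1 /= ?sn // bj.
      rewrite -opprB -natrB ?(ltnW jlt) // mulNr mulr_natl.
      move/esym/eqP; rewrite oppr_eq0 => /eqP; apply: natmul_cancel.
      by rewrite subn_gt0.
    move: Ha0; rewrite -(negbK (psi _ _ _ != 0)) => /negP; apply; apply/negPn/eqP.
    apply: (natmul_cancel (fact_gt0 n)); rewrite -diagF; apply: Zn; exact: size_nseq.
  split; first by rewrite bj jeq.
  move=> k s sk nk; apply: (Frob_up S1 nk sk).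
- case=> [b1 Hz]; split.
  + move=> a k nk; apply: (natmul_cancel (fact_gt0 k)).
    by rewrite -diagF (Hz k) // size_nseq.
  + exists 1; have := diagF phi 1 n; rewrite Frob_ones b1 prod_sub => h.
    have : psi phi 1 n = 1.
      apply/eqP; rewrite -subr_eq0; apply/eqP; apply: (natmul_cancel (fact_gt0 n)).
      by rewrite mulrnBl -h subrr.
    by move=> ->; apply: oner_neq0.
Qed.
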